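(* Let $(Q,\circ)$ and $(Q,* )$ be quandles on the same set $Q$ such that $$(a\circ b)*c=(a*c)\circ(b*c)\quad\text{and}\quad (a*b)\circ c=(a\circ c)*(b\circ c)\qquad\text{for all }a,b,c\in Q.$$ Then every finite word $w=s_1s_2\cdots s_k$ in the alphabet $\{\circ,*,\bar\circ,\bar*\}$ defines a quandle operation $\star_w$ on $Q$, where $$a\star_w b=(\cdots((a\,s_1\,b)\,s_2\,b)\cdots)\,s_k\,b$$ (and the empty word gives $a\star_w b=a$).
   Context: A quandle operation on a set $Q$ is a binary operation $*$ with $x*x=x$, unique right division, and $(x*y)*z=(x*z)*(y*z)$. For a quandle operation $*$, $\bar*$ denotes its right inverse operation: $a=c*b\iff c=a\,\bar*\,b$; similarly $\bar\circ$ for $\circ$. *)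

(* Defs.v *)
From Stdlib Require Import List.
Import ListNotations.

Definition is_quandle {Q : Type} (op : Q -> Q -> Q) : Prop :=
  (forall x : Q, op x x = x) /\
  (forall a b : Q, exists! c : Q, op c b = a) /\
  (forall x y z : Q, op (op x y) z = op (op x z) (op y z)).

Definition is_right_inverse {Q : Type} (op opb : Q -> Q -> Q) : Prop :=
  forall a b c : Q, a = op c b <-> c = opb a b.

Inductive letter : Type := LCirc | LStar | LCircBar | LStarBar.

Definition letter_op {Q : Type} (circ star circb starb : Q -> Q -> Q)
  (l : letter) : Q -> Q -> Q :=
  match l with
  | LCirc => circ | LStar => star | LCircBar => circb | LStarBar => starb
  end.

Definition word_op {Q : Type} (circ star circb starb : Q -> Q -> Q)
  (w : list letter) (a b : Q) : Q :=
  fold_left (fun x l => letter_op circ star circb starb l x b) w a.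

(* Main.v *)
Require Import Defs.
From Stdlib Require Import List.

Definition pres {Q : Type} (phi : Q -> Q) (op : Q -> Q -> Q) : Prop :=
  forall x y, phi (op x y) = op (phi x) (phi y).

Lemma pres_rinv {Q : Type} (phi : Q -> Q) op opb :
  pres phi op -> is_right_inverse op opb -> pres phi opb.
Proof.
  intros Hp Hr x y. set (c := opb x y).
  assert (Hx : x = op c y) by (apply Hr; reflexivity).
  apply (proj1 (Hr _ _ _)). rewrite Hx, Hp. reflexivity.
Qed.

Lemma pres_inv {Q : Type} (phi psi : Q -> Q) op :
  pres psi op -> (forall x, psi (phi x) = x) -> (forall x, phi (psi x) = x) ->
  pres phi op.
Proof.
  intros Hp H1 H2 x y.
  rewrite <- (H1 x) at 1. rewrite <- (H1 y) at 1.
  rewrite <- Hp. apply H2.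
Qed.

Lemma rinv_l {Q : Type} op opb : is_right_inverse op opb ->
  forall c b : Q, opb (op c b) b = c.
Proof. intros H c b. symmetry. apply (proj1 (H _ _ _)). reflexivity. Qed.

Lemma rinv_r {Q : Type} op opb : is_right_inverse op opb ->
  forall a b : Q, op (opb a b) b = a.
Proof. intros H a b. symmetry. apply (proj2 (H _ _ _)). reflexivity. Qed.

Theorem theorem4p11 (Q : Type) (circ star circb starb : Q -> Q -> Q)
  (Hcirc : is_quandle circ) (Hstar : is_quandle star)
  (Hcircb : is_right_inverse circ circb) (Hstarb : is_right_inverse star starb)
  (H1 : forall a b c : Q, star (circ a b) c = circ (star a c) (star b c))
  (H2 : forall a b c : Q, circ (star a b) c = star (circ a c) (circ b c)) :
  forall w : list letter, is_quandle (word_op circ star circb starb w).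
Proof.
  destruct Hcirc as [Ci [_ Cd]]. destruct Hstar as [Si [_ Sd]].
  set (L := letter_op circ star circb starb).
  set (P := fun phi : Q -> Q => forall l, pres phi (L l)).
  assert (Pcirc : forall z, P (fun x => circ x z)).
  { intros z l.
    assert (A : pres (fun x => circ x z) circ) by (intros x y; apply Cd).
    assert (B : pres (fun x => circ x z) star) by (intros x y; apply H2).
    destruct l; simpl; [exact A|exact B|exact (pres_rinv _ _ _ A Hcircb)|exact (pres_rinv _ _ _ B Hstarb)]. }
  assert (Pstar : forall z, P (fun x => star x z)).
  { intros z l.
    assert (A : pres (fun x => star x z) circ) by (intros x y; apply H1).
    assert (B : pres (fun x => star x z) star) by (intros x y; apply Sd).
    destruct l; simpl; [exact A|exact B|exact (pres_rinv _ _ _ A Hcircb)|exact (pres_rinv _ _ _ B Hstarb)]. }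
  assert (Plet : forall l z, P (fun x => L l x z)).
  { intros l z; destruct l; simpl; auto.
    - intros l. eapply pres_inv; [apply (Pcirc z l)| |];
      intros x; simpl; [apply (rinv_r _ _ Hcircb) | apply (rinv_l _ _ Hcircb)].
    - intros l. eapply pres_inv; [apply (Pstar z l)| |];
      intros x; simpl; [apply (rinv_r _ _ Hstarb) | apply (rinv_l _ _ Hstarb)]. }
  assert (WE : forall w l a b, word_op circ star circb starb (l :: w) a b
                = word_op circ star circb starb w (L l a b) b) by reflexivity.
  assert (Pword : forall w z, P (fun x => word_op circ star circb starb w x z)).
  { induction w as [|l w IH]; intros z l' x y; [reflexivity|].
    rewrite !WE. rewrite (Plet l z l'). apply (IH z l'). }
  assert (Hom : forall phi, P phi -> forall w x y,
      phi (word_op circ star circb starb w x y)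
      = word_op circ star circb starb w (phi x) (phi y)).
  { intros phi Hp w. induction w as [|l w IH]; intros x y; [reflexivity|].
    rewrite !WE, IH, (Hp l). reflexivity. }
  set (Li := fun l => match l with LCirc => circb | LStar => starb
                     | LCircBar => circ | LStarBar => star end).
  assert (LiL : forall l c b, Li l (L l c b) b = c).
  { intros [] c b; simpl; try apply (rinv_l _ _ Hcircb); try apply (rinv_l _ _ Hstarb);
    try apply (rinv_r _ _ Hcircb); apply (rinv_r _ _ Hstarb). }
  assert (LLi : forall l a b, L l (Li l a b) b = a).
  { intros [] c b; simpl; try apply (rinv_l _ _ Hcircb); try apply (rinv_l _ _ Hstarb);
    try apply (rinv_r _ _ Hcircb); apply (rinv_r _ _ Hstarb). }
  assert (LId : forall l x, L l x x = x).
  { intros [] x; simpl; auto.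
    - symmetry; apply Hcircb; auto.
    - symmetry; apply Hstarb; auto. }
  intros w. split; [|split].
  - induction w as [|l w IH]; intros x; [reflexivity|]. rewrite WE, LId. apply IH.
  - intros a b.
    set (inv := fix inv (w : list letter) (a : Q) : Q :=
           match w with nil => a | l :: w' => Li l (inv w' a) b end).
    assert (K1 : forall w0 a, word_op circ star circb starb w0 (inv w0 a) b = a).
    { induction w0 as [|l w1 IH]; intros a0; [reflexivity|].
      simpl inv. rewrite WE, LLi. apply IH. }
    assert (K2 : forall w0 c, inv w0 (word_op circ star circb starb w0 c b) = c).
    { induction w0 as [|l w1 IH]; intros c; [reflexivity|].
      rewrite WE. simpl inv. rewrite IH. apply LiL. }
    exists (inv w a). split; [apply K1|].
    intros c Hc. rewrite <- Hc. rewrite K2. reflexivity.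
  - intros x y z. apply (Hom (fun u => word_op circ star circb starb w u z)).
    apply Pword.
Qed.
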